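(* The free semigroup of rank 1 with a zero adjoined, i.e. the semigroup with presentation $\langle a,b\mid b^2=b,\ ab=ba=b\rangle$, is not isomorphic to any automaton semigroup.
   Context: A synchronous automaton is $(Q,\Sigma,t,o)$ with $Q$ a finite set of states, $\Sigma$ a finite alphabet, $t:Q\times\Sigma\to Q$ and $o:Q\times\Sigma\to\Sigma$. Each state $q$ induces $q:\Sigma^*\to\Sigma^*$ by $q(\emptyset)=\emptyset$, $q(\sigma w)=o(q,\sigma)\,q'(w)$ with $q'=t(q,\sigma)$. An automaton semigroup is the semigroup of maps generated under composition by the states of a synchronous automaton. *)

(* Defs.v *)
From mathcomp Require Import all_boot.
Set Implicit Arguments. Unset Strict Implicit. Unset Printing Implicit Defensive.

Section Automaton.
Variables (Q Sigma : finType) (t : Q -> Sigma -> Q) (o : Q -> Sigma -> Sigma).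

Fixpoint state_map (q : Q) (w : seq Sigma) : seq Sigma :=
  match w with
  | [::] => [::]
  | s :: w' => o q s :: state_map (t q s) w'
  end.

Definition state_comp (q : Q) (qs : seq Q) : seq Sigma -> seq Sigma :=
  foldr (fun p g => state_map p \o g) (state_map q) qs.

Definition in_automaton_semigroup (f : seq Sigma -> seq Sigma) : Prop :=
  exists (q : Q) (qs : seq Q), forall w, f w = state_comp q qs w.
End Automaton.

(* Normal forms: Some n represents a^(n+1), None represents b (the zero). *)
Definition FreeMonoZero := option nat.

Definition fmz_mul (x y : FreeMonoZero) : FreeMonoZero :=
  match x, y with
  | Some m, Some n => Some (m + n + 1)
  | _, _ => None
  end.

Definition iso_to_automaton_semigroup (Q Sigma : finType)
    (t : Q -> Sigma -> Q) (o : Q -> Sigma -> Sigma)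
    (phi : FreeMonoZero -> seq Sigma -> seq Sigma) : Prop :=
  [/\ forall x y, (forall w, phi (fmz_mul x y) w = (phi x \o phi y) w),
      forall x y, (forall w, phi x w = phi y w) -> x = y,
      forall x, in_automaton_semigroup t o (phi x)
    & forall f, in_automaton_semigroup t o f ->
        exists x, forall w, phi x w = f w].

(* Main.v *)
Require Import Defs.
From mathcomp Require Import all_boot.
From Stdlib Require Import ClassicalEpsilon.
Set Implicit Arguments. Unset Strict Implicit. Unset Printing Implicit Defensive.

Fixpoint secm (T : Type) (f : T -> T) (S : T -> seq T -> seq T) (n : nat)
  (x : T) (w : seq T) : seq T :=
  match n with
  | 0 => w
  | n'.+1 => secm f S n' (f x) (S x w)
  end.

Fixpoint hits (T : Type) (f : T -> T) (bad : T -> bool) (n : nat) (x : T) : bool :=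
  match n with
  | 0 => false
  | n'.+1 => bad x || hits f bad n' (f x)
  end.

Lemma hitsD (T : Type) (f : T -> T) bad a b x :
  hits f bad (a + b) x = hits f bad a x || hits f bad b (iter a f x).
Proof.
elim: a x => [|a IH] x //=.
by rewrite IH orbA -iterSr.
Qed.

Lemma hits_mono (T : Type) (f : T -> T) bad a b x :
  a <= b -> hits f bad a x -> hits f bad b x.
Proof.
move=> hab h; rewrite -(subnKC hab) hitsD h //.
Qed.

Theorem mainTheorem14 :
  forall (Q Sigma : finType) (t : Q -> Sigma -> Q) (o : Q -> Sigma -> Sigma),
    ~ exists phi : FreeMonoZero -> seq Sigma -> seq Sigma,
        iso_to_automaton_semigroup t o phi.
Proof.
move=> Q Sigma t o [phi [Hhom Hinj Hin Hsurj]].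
have Hst : forall p, exists x, forall w, phi x w = state_map t o p w.
  by move=> p; apply: Hsurj; exists p, [::].
pose psi p := proj1_sig (constructive_indefinite_description _ (Hst p)).
have Hpsi : forall p w, phi (psi p) w = state_map t o p w.
  by move=> p; exact: (proj2_sig (constructive_indefinite_description _ (Hst p))).
clearbody psi.
pose A := phi (Some 0).
have phiS : forall k w, phi (Some k) w = iter k.+1 A w.
  elim=> [|k IH] w //.
  have := Hhom (Some 0) (Some k) w; rewrite /= add0n addn1 => ->.
  by rewrite IH.
pose Z := phi None.
have ZL : forall y w, phi y (Z w) = Z w.
  by move=> y w; have := Hhom y None w; case: y => [k|] /= <-.
have ZR : forall y w, Z (phi y w) = Z w.
  by move=> y w; have := Hhom None y w; rewrite /Z; case: y => [k|] /= ->.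
have Hcomp : forall q qs w,
    state_comp t o q qs w = phi (foldr fmz_mul (psi q) (map psi qs)) w.
  move=> q; elim=> [|p qs IH] w /=; first by rewrite Hpsi.
  rewrite Hhom /= -IH -Hpsi //.
have [qa HqA] : exists qa, forall w, state_map t o qa w = A w.
  have [q [qs Hq]] := Hin (Some 0).
  have E : Some 0 = foldr fmz_mul (psi q) (map psi qs).
    by apply: Hinj => w; rewrite Hq Hcomp.
  case: qs Hq E => [|p qs] Hq /=.
    by move=> _; exists q => w; rewrite /A Hq.
  case: (psi p) => [a|] //; case: (foldr _ _ _) => [b|] //=.
  by rewrite addn1.
have psiqa : psi qa = Some 0.
  by apply: Hinj => w; rewrite Hpsi HqA.
pose f := o qa.
pose S x := state_map t o (t qa x).
pose bad x := psi (t qa x) == None.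
have HS : forall x w, S x w = phi (psi (t qa x)) w.
  by move=> x w; rewrite Hpsi.
have iterA : forall n x w, iter n A (x :: w) = iter n f x :: secm f S n x w.
  elim=> [|n IH] x w //.
  by rewrite iterSr -HqA /= -/(f) IH -iterSr.
have secZ : forall n y w, secm f S n y (Z w) = Z w.
  elim=> [|n IH] y w //=.
  by rewrite HS ZL IH.
have hitZ : forall n x w, hits f bad n x -> secm f S n x w = Z w.
  elim=> [|n IH] x w //=.
  case/orP=> [/eqP Hb | Hh].
    by rewrite HS Hb secZ.
  by rewrite IH // HS ZR.
have nohitE : forall n x, ~~ hits f bad n x ->
    exists E, n <= E /\ forall w, secm f S n x w = iter E A w.
  elim=> [|n IH] x /=; first by move=> _; exists 0.
  rewrite negb_or => /andP [Hb Hh].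
  have [E [HE1 HE2]] := IH _ Hh.
  move: Hb; rewrite /bad; case Hk: (psi (t qa x)) => [k|] // _.
  exists (E + k.+1); split; first by rewrite addnS ltnS (leq_trans HE1 (leq_addr _ _)).
  by move=> w; rewrite HE2 HS Hk phiS iterD.
have [r Pr Hr] : extremum_spec geq (fun p => psi p != None)
    (fun p => odflt 0 (psi p)) (arg_max qa (fun p => psi p != None) (fun p => odflt 0 (psi p))).
  by apply: arg_maxnP; rewrite psiqa.
move: Pr Hr; case Hm: (psi r) => [m|] // _ Hr.
have deg1 : forall x, ~~ hits f bad m.+1 x -> psi (t qa x) = Some 0.
  move=> x /=; rewrite negb_or => /andP [Hb Hh].
  move: Hb; rewrite /bad; case Hk: (psi (t qa x)) => [k|] // _.
  have [E [HE1 HE2]] := nohitE _ _ Hh.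
  have Ht : psi (t r x) = Some (E + k).
    apply: Hinj => w; rewrite Hpsi.
    have := iterA m.+1 x w; rewrite -phiS -Hm Hpsi /= => [[_ ->]].
    by rewrite HE2 HS Hk phiS -iterD addnS.
  have := Hr (t r x); rewrite Ht /= => /(_ isT) HEk.
  have : E + k <= E by apply: leq_trans HEk HE1.
  by rewrite -{2}(addn0 E) leq_add2l leqn0 => /eqP ->.
have all1 : forall x, (forall N, ~~ hits f bad N x) ->
    forall n w, secm f S n x w = iter n A w.
  move=> x Hx n; elim: n x Hx => [|n IH] x Hx w //=.
  rewrite HS deg1 // IH; first by rewrite -iterSr.
  by move=> N; have := Hx N.+1; rewrite /= negb_or => /andP [].
pose key n := ([ffun y => iter n f y], [set y | hits f bad n y]).
pose kf (i : 'I_(#|{: {ffun Sigma -> Sigma} * {set Sigma}}|.+1)) := key (val i).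
have : ~~ injectiveb kf.
  apply/negP => /injectiveP Hi; have := @leq_card _ _ kf Hi.
  by rewrite card_ord ltnn.
case/injectivePn => i [j Hij Hkij].
have [M [M' [HMM Hkey]]] : exists M M', M < M' /\ key M = key M'.
  case: (ltngtP i j) => H.
  - by exists i, j.
  - by exists j, i.
  - by move: Hij; rewrite (val_inj H) eqxx.
have hf : forall y, iter M f y = iter M' f y.
  move=> y; have := congr1 (fun k : {ffun Sigma -> Sigma} * {set Sigma} => k.1 y) Hkey; rewrite !ffunE; exact.
have hh : forall y, hits f bad M y = hits f bad M' y.
  move=> y; have := congr1 (fun k : {ffun Sigma -> Sigma} * {set Sigma} => y \in k.2) Hkey; rewrite !inE; exact.
pose P := M' - M.
have HP : M + P = M' by rewrite /P subnKC // ltnW.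
have HP0 : 0 < P by rewrite /P subn_gt0.
have hstab : forall k y, hits f bad (M + k * P) y = hits f bad M y.
  elim=> [|k IH] y; first by rewrite mul0n addn0.
  by rewrite mulSn addnA HP !hitsD -hh -hf -hitsD IH.
have hall : forall y, ~~ hits f bad M y -> forall N, ~~ hits f bad N y.
  move=> y Hy N; apply/negP => HN; move/negP: Hy; apply.
  rewrite -(hstab N); apply: hits_mono HN.
  exact: leq_trans (leq_pmulr _ HP0) (leq_addl _ _).
have iternil : forall n, iter n A [::] = [::].
  by elim=> [|n IH] //=; rewrite IH -HqA.
have Emain : forall w d, iter (d + M) A w = iter (d + M') A w.
  elim=> [|x w IH] d; first by rewrite !iternil.
  rewrite !iterA !iterD hf; congr (_ :: _).
  case Hx: (hits f bad M x).
    rewrite !hitZ //; apply: hits_mono (leq_addl _ _) _ => //.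
    by rewrite -hh.
  have Hx' : forall N, ~~ hits f bad N x by apply: hall; rewrite Hx.
  by rewrite !all1 // IH.
have : Some M = Some M'.
  by apply: Hinj => w; rewrite !phiS; exact: (Emain w 1).
by case=> HE; move: HMM; rewrite HE ltnn.
Qed.
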